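(* Let $d\ge 3$ and let $A=\lambda B+(1-\lambda)B'$ with $0<\lambda<1$, where $B,B'$ are $d$-dimensional $(0,1)$-matrices of order $4$ each equivalent to $\mathcal{M}_4^d$. Suppose the tessellation index of $A$ is $d-1$, and suppose that no new entry is added to the support of any filled subcube, i.e. $\operatorname{supp}(B')\cap C\subseteq\operatorname{supp}(B)$ for every filled subcube $C$ of $B$ and $\operatorname{supp}(B)\cap C'\subseteq\operatorname{supp}(B')$ for every filled subcube $C'$ of $B'$. Then $A$ is equivalent to a matrix from $\mathcal{L}_4^d$.
   Context: $\mathcal{M}_n^d$ has entry $1$ at $\alpha$ iff $\alpha_1+\dots+\alpha_d\equiv0\pmod n$. $\mathcal{L}_n^d$ is the family of matrices $\mu\mathcal{M}_n^d+(1-\mu)M$, $0<\mu<1$, where $M$ is the $(0,1)$-matrix with support $\{\alpha:\alpha_1+\dots+\alpha_{d-1}+\pi(\alpha_d)\equiv0\pmod n\}$, $\pi$ the transposition of $0$ and $1$. Equivalence: permuting coordinate positions and/or applying a permutation of $\{0,\dots,n-1\}$ to a single coordinate, repeatedly. The support $\operatorname{supp}$ is the set of indices of nonzero entries. Define $p_1,p_2,p_3:\{0,1,2,3\}\to\{0,1\}$ by $p_1(0)=p_1(1)=0,\ p_1(2)=p_1(3)=1$; $p_2(0)=p_2(2)=0,\ p_2(1)=p_2(3)=1$; $p_3(0)=p_3(3)=0,\ p_3(1)=p_3(2)=1$; and $\mu_1(0)=\mu_1(2)=0,\ \mu_1(1)=\mu_1(3)=1$; $\mu_2(0)=\mu_2(1)=0,\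 \mu_2(2)=\mu_2(3)=1$; $\mu_3(0)=\mu_3(2)=0,\ \mu_3(1)=\mu_3(3)=1$. $Q_s^d=\{y\in\{0,1\}^d:w(y)\equiv s\pmod 2\}$ ($w$ = Hamming weight). For $\mathcal{E}\in\{1,2,3\}^d$, $s\in\{0,1\}$, $\lambda:Q_s^d\to\{0,1\}$, the block permutation with parameters $(\mathcal{E},\lambda,s)$ is the $(0,1)$-matrix with entry $1$ at $\alpha$ iff $\bigoplus_i p_{\varepsilon_i}(\alpha_i)=s$ and $\bigoplus_i\mu_{\varepsilon_i}(\alpha_i)\oplus\lambda(p_{\varepsilon_1}(\alpha_1),\dots,p_{\varepsilon_d}(\alpha_d))=0$. Every matrix equivalent to $\mathcal{M}_4^d$ ($d\ge3$) is a block permutation for a unique parameter triple; relative to these, its subcubes are $C_y=\{\alpha:p_{\varepsilon_i}(\alpha_i)=y_i\ \forall i\}$ and $C_y$ is filled if $w(y)\equiv s\pmod 2$. The intersection of a subcube of $B$ with a subcube of $B'$ is either empty or a product set of size $2^j$; the tessellation index of $\lambda B+(1-\lambda)B'$ is the maximum of such $j$ over pairs (filled subcube of $B$, filled subcube of $B'$) with nonempty intersection, and $-\infty$ if all are empty. *)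

(* Defs.v *)
From Stdlib Require Import Relation_Operators.
From mathcomp Require Import all_boot all_order all_algebra.
From mathcomp Require Import fingroup perm.
Set Implicit Arguments. Unset Strict Implicit. Unset Printing Implicit Defensive.
Import Order.TTheory GRing.Theory Num.Theory.
Local Open Scope ring_scope.

(* Indices of a d-dimensional matrix of order n: alpha = (alpha_1,..,alpha_d),
   alpha_i in {0,..,n-1}; coordinate i is encoded by (i : 'I_d). *)
Definition idx (d n : nat) := {ffun 'I_d -> 'I_n}.

Definition mat (T : Type) (d n : nat) := idx d n -> T.

Section Defs.
Variable R : realFieldType.
Local Unset Implicit Arguments.

Definition supp d n (A : mat R d n) : {set idx d n} := [set a | A a != 0].

Definition Mmat (d n : nat) : mat R d n :=
  fun a => if ((\sum_(i < d) (a i : nat)) %% n == 0)%N then 1 else 0.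

Definition pi01 (x : nat) : nat :=
  if x == 0%N then 1%N else if x == 1%N then 0%N else x.

(* the (0,1)-matrix with support alpha_1+...+alpha_{d-1}+pi(alpha_d) = 0 mod n
   (the last coordinate alpha_d is the coordinate with index d-1) *)
Definition Mpi (d n : nat) : mat R d n :=
  fun a => if ((\sum_(i < d) (if (i : nat) == d.-1 then pi01 (a i) else a i)) %% n
               == 0)%N then 1 else 0.

Definition Lmat (d n : nat) (mu : R) : mat R d n :=
  fun a => mu * Mmat d n a + (1 - mu) * Mpi d n a.

Definition in_L (d n : nat) (A : mat R d n) : Prop :=
  exists mu : R, 0 < mu < 1 /\ A = Lmat d n mu.

Local Set Implicit Arguments.
Inductive equiv_step (d n : nat) : mat R d n -> mat R d n -> Prop :=
| step_pos (A : mat R d n) (t : {perm 'I_d}) :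
    equiv_step A (fun a => A [ffun i => a (t i)])
| step_val (A : mat R d n) (k : 'I_d) (s : {perm 'I_n}) :
    equiv_step A (fun a => A [ffun i => if i == k then s (a i) else a i]).

Definition mat_equiv (d n : nat) : mat R d n -> mat R d n -> Prop :=
  clos_refl_trans (mat R d n) (@equiv_step d n).

End Defs.
Arguments supp {R d n}.
Arguments in_L {R d n}.
Arguments mat_equiv {R d n}.

(* The functions p_1,p_2,p_3 and mu_1,mu_2,mu_3 on {0,1,2,3};
   epsilon in {1,2,3} is encoded by e : 'I_3 with epsilon = e + 1. *)
Definition pfun (e : 'I_3) (x : 'I_4) : bool :=
  match (e : nat), (x : nat) with
  | 0, x => (x == 2) || (x == 3)
  | 1, x => (x == 1) || (x == 3)
  | _, x => (x == 1) || (x == 2)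
  end%N.

Definition mufun (e : 'I_3) (x : 'I_4) : bool :=
  match (e : nat), (x : nat) with
  | 0, x => (x == 1) || (x == 3)
  | 1, x => (x == 2) || (x == 3)
  | _, x => (x == 1) || (x == 3)
  end%N.

Definition xorsum d (f : 'I_d -> bool) : bool := \big[addb/false]_(i < d) f i.

Definition pvec d (E : {ffun 'I_d -> 'I_3}) (a : idx d 4) : {ffun 'I_d -> bool} :=
  [ffun i => pfun (E i) (a i)].

(* block permutation with parameters (E, lam, s); lam is given on all of
   {0,1}^d but only its values on Q_s^d matter. *)
Definition blockperm (R : realFieldType) d (E : {ffun 'I_d -> 'I_3})
    (lam : {ffun 'I_d -> bool} -> bool) (s : bool) : mat R d 4 :=
  fun a => if (xorsum (fun i => pfun (E i) (a i)) == s) &&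
              ((xorsum (fun i => mufun (E i) (a i))) (+) lam (pvec E a) == false)
           then 1 else 0.

Definition subcube d (E : {ffun 'I_d -> 'I_3}) (y : {ffun 'I_d -> bool})
  : {set idx d 4} := [set a | pvec E a == y].

Definition hweight d (y : {ffun 'I_d -> bool}) : nat := #|[set i | y i]|.
Definition filled d (s : bool) (y : {ffun 'I_d -> bool}) : bool :=
  odd (hweight y) == s.

(* tessellation index of lambda B + (1-lambda) B' where B, B' are block
   permutations with parameters (E,_,s), (E',_,s'): None encodes -infinity,
   Some j is the maximal j such that some filled subcube of B meets some
   filled subcube of B' in 2^j entries. *)
Definition max_inter d (E : {ffun 'I_d -> 'I_3}) (s : bool)
    (E' : {ffun 'I_d -> 'I_3}) (s' : bool) : nat :=
  \max_(y | filled s y) \max_(y' | filled s' y')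
     #|subcube E y :&: subcube E' y'|.

Definition tess_index d (E : {ffun 'I_d -> 'I_3}) (s : bool)
    (E' : {ffun 'I_d -> 'I_3}) (s' : bool) : option nat :=
  let m := max_inter E s E' s' in
  if m == 0%N then None else Some (trunc_log 2 m).

(* Main.v *)
Require Import Defs.
From mathcomp Require Import all_boot all_order all_algebra fingroup perm.
From mathcomp Require Import zify.
From Stdlib Require Import FunctionalExtensionality.
Set Implicit Arguments. Unset Strict Implicit. Unset Printing Implicit Defensive.
Definition all4 (P : 'I_4 -> bool) := [&& P (@Ordinal 4 0 isT), P (@Ordinal 4 1 isT), P (@Ordinal 4 2 isT) & P (@Ordinal 4 3 isT)].
Definition all3 (P : 'I_3 -> bool) := [&& P (@Ordinal 3 0 isT), P (@Ordinal 3 1 isT) & P (@Ordinal 3 2 isT)].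
Definition allb (P : bool -> bool) := P true && P false.
Lemma all4P P : all4 P -> forall x, P x.
Proof.
case/and4P=> h0 h1 h2 h3 [[|[|[|[|]]]] Hx] //.
- by rewrite (bool_irrelevance Hx isT).
- by rewrite (bool_irrelevance Hx isT).
- by rewrite (bool_irrelevance Hx isT).
- by rewrite (bool_irrelevance Hx isT).
Qed.
Lemma all3P P : all3 P -> forall x, P x.
Proof.
case/and3P=> h0 h1 h2 [[|[|[|]]] Hx] //.
- by rewrite (bool_irrelevance Hx isT).
- by rewrite (bool_irrelevance Hx isT).
- by rewrite (bool_irrelevance Hx isT).
Qed.
Lemma allbP P : allb P -> forall x, P x.
Proof. by case/andP=> h0 h1 []. Qed.
Definition partner (f : nat) (x : 'I_4) : 'I_4 :=
  match f, val x with
  | 0, 0 => @Ordinal 4 1 isT | 0, 1 => @Ordinal 4 0 isT | 0, 2 => @Ordinal 4 3 isT | 0, _ => @Ordinal 4 2 isT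
  | 1, 0 => @Ordinal 4 2 isT | 1, 1 => @Ordinal 4 3 isT | 1, 2 => @Ordinal 4 0 isT | 1, _ => @Ordinal 4 1 isT
  | _, 0 => @Ordinal 4 3 isT | _, 1 => @Ordinal 4 2 isT | _, 2 => @Ordinal 4 1 isT | _, _ => @Ordinal 4 0 isT
  end%N.
Definition tau (e e' : 'I_3) (c : bool) (x : 'I_4) : 'I_4 :=
  if pfun e' x == c (+) pfun e x then x else partner (3 - e - e')%N x.
Definition lf (L0 L1 : bool) (b : bool) := if b then L1 else L0.
Definition Bxf (e : 'I_3) (s R Mu L0 L1 : bool) (x : 'I_4) : bool :=
  (R (+) pfun e x == s) && (Mu (+) mufun e x (+) lf L0 L1 (pfun e x) == false).
Definition core (e e' : 'I_3) (s s' R Mu L0 L1 L0' L1' : bool) : bool :=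
  all4 (fun x => (R (+) pfun e x == s) && Bxf e' s' R Mu L0' L1' x ==> Bxf e s R Mu L0 L1 x) &&
  all4 (fun x => (R (+) pfun e' x == s') && Bxf e s R Mu L0 L1 x ==> Bxf e' s' R Mu L0' L1' x) ==>
  all4 (fun x => Bxf e' s' R Mu L0' L1' x == Bxf e s R Mu L0 L1 (tau e e' (s (+) s') x)).
Lemma coreP : all3 (fun e => all3 (fun e' => allb (fun s => allb (fun s' =>
  allb (fun R => allb (fun Mu => allb (fun L0 => allb (fun L1 => allb (fun L0' => allb (fun L1' =>
  (e != e') ==> core e e' s s' R Mu L0 L1 L0' L1')))))))))).
Proof. vm_compute. reflexivity. Qed.

Lemma all4I (P : 'I_4 -> bool) : (forall x, P x) -> all4 P.
Proof. by move=> H; rewrite /all4 !H. Qed.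

Definition has4 (P : 'I_4 -> bool) := [|| P (@Ordinal 4 0 isT), P (@Ordinal 4 1 isT), P (@Ordinal 4 2 isT) | P (@Ordinal 4 3 isT)].
Lemma has4P P : has4 P -> exists x, P x.
Proof. by case/or4P=> h; eexists; exact: h. Qed.

Lemma card4 (P : pred 'I_4) :
  #|P| = (P (@Ordinal 4 0 isT) + P (@Ordinal 4 1 isT) + P (@Ordinal 4 2 isT) + P (@Ordinal 4 3 isT))%N.
Proof.
have E : enum 'I_4 = [:: @Ordinal 4 0 isT; @Ordinal 4 1 isT; @Ordinal 4 2 isT; @Ordinal 4 3 isT].
  by apply: (inj_map val_inj); rewrite val_enum_ord.
have H x : (x \in P) = P x by [].
rewrite cardE /enum_mem -enumT E /= !H.
by case: (P _); case: (P _); case: (P _); case: (P _).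
Qed.

Lemma core_prop e e' s s' R Mu L0 L1 L0' L1' : e != e' ->
 (forall x, R (+) pfun e x == s -> Bxf e' s' R Mu L0' L1' x -> Bxf e s R Mu L0 L1 x) ->
 (forall x, R (+) pfun e' x == s' -> Bxf e s R Mu L0 L1 x -> Bxf e' s' R Mu L0' L1' x) ->
 forall x, Bxf e' s' R Mu L0' L1' x = Bxf e s R Mu L0 L1 (tau e e' (s (+) s') x).
Proof.
move=> hee H1 H2 x.
have C : core e e' s s' R Mu L0 L1 L0' L1'.
  have := allbP (allbP (allbP (allbP (allbP (allbP (allbP (allbP (all3P (all3P coreP e) e') s) s') R) Mu) L0) L1) L0') L1'.
  by rewrite hee.
move: C; rewrite /core => /implyP C.
apply/eqP; apply: (all4P (C _) x).
apply/andP; split; apply: all4I => y; apply/implyP => /andP [h1 h2]; by [apply: H1 | apply: H2].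
Qed.

Definition O0 := @Ordinal 4 0 isT.
Definition O1 := @Ordinal 4 1 isT.
Definition O2 := @Ordinal 4 2 isT.
Definition O3 := @Ordinal 4 3 isT.
Definition o4 (n : nat) : 'I_4 := match n with 0 => O0 | 1 => O1 | 2 => O2 | _ => O3 end.
Lemma o4K (n : nat) : (n < 4)%N -> val (o4 n) = n.
Proof. by case: n => [|[|[|[|]]]]. Qed.
Definition add4 (x y : 'I_4) : 'I_4 := o4 ((x + y) %% 4).
Definition negsub (z x : 'I_4) : 'I_4 := o4 ((8 - z - x) %% 4).
Definition piI (x : 'I_4) : 'I_4 := o4 (pi01 x).
Definition swp (v x : 'I_4) : 'I_4 := if x == v then add4 v O1 else if x == add4 v O1 then v else x.
Lemma add4E x y : val (add4 x y) = ((x + y) %% 4)%N.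
Proof. by rewrite o4K // ltn_pmod. Qed.
Lemma piIE x : val (piI x) = pi01 x.
Proof. by case: x => [[|[|[|[|]]]] ?]. Qed.

Definition factor_fin := all3 (fun e => all3 (fun e' => allb (fun b => allb (fun b' =>
  ([pred x : 'I_4 | (pfun e x == b) && (pfun e' x == b')] O0 +
   [pred x : 'I_4 | (pfun e x == b) && (pfun e' x == b')] O1 +
   [pred x : 'I_4 | (pfun e x == b) && (pfun e' x == b')] O2 +
   [pred x : 'I_4 | (pfun e x == b) && (pfun e' x == b')] O3 ==
   if e == e' then (if b == b' then 2 else 0) else 1)%N)))).
Lemma factor_finP : factor_fin. Proof. vm_compute. reflexivity. Qed.

Lemma factorE e e' b b' :
  #|[pred x : 'I_4 | (pfun e x == b) && (pfun e' x == b')]| =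
   if e == e' then (if b == b' then 2 else 0)%N else 1%N.
Proof.
rewrite card4; apply/eqP.
exact: (allbP (allbP (all3P (all3P factor_finP e) e') b) b').
Qed.

Definition tau_fin := all3 (fun e => all3 (fun e' => allb (fun c => (e != e') ==>
  [&& has4 (fun u => tau e e' c u != u),
      all4 (fun u => (tau e e' c u != u) ==> (pfun e (tau e e' c u) != pfun e u)),
      all4 (fun x => tau e e' c (tau e e' c x) == x) &
      all4 (fun u => all4 (fun y => (tau e e' c u != u) ==> (tau e e' c y != y) ==> (y == u) || (y == tau e e' c u)))]))).
Lemma tau_finP : tau_fin. Proof. vm_compute. reflexivity. Qed.

Section TauFacts.
Variables (e e' : 'I_3) (c : bool).
Hypothesis hee : e != e'.
Let T := tau_finP.
Lemma tauF : [&& has4 (fun u => tau e e' c u != u),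
      all4 (fun u => (tau e e' c u != u) ==> (pfun e (tau e e' c u) != pfun e u)),
      all4 (fun x => tau e e' c (tau e e' c x) == x) &
      all4 (fun u => all4 (fun y => (tau e e' c u != u) ==> (tau e e' c y != y) ==> (y == u) || (y == tau e e' c u)))].
Proof. by have := allbP (all3P (all3P tau_finP e) e') c; rewrite hee. Qed.
Lemma tau_moved : exists u, tau e e' c u != u.
Proof. by case/and4P: tauF => /has4P. Qed.
Lemma tau_pdiff u : tau e e' c u != u -> pfun e (tau e e' c u) != pfun e u.
Proof. by case/and4P: tauF => _ /all4P /(_ u) /implyP. Qed.
Lemma tauK x : tau e e' c (tau e e' c x) = x.
Proof. by case/and4P: tauF => _ _ /all4P /(_ x) /eqP. Qed.
Lemma tau_two u y : tau e e' c u != u -> tau e e' c y != y -> y = u \/ y = tau e e' c u.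
Proof.
case/and4P: tauF => _ _ _ /all4P /(_ u) /all4P /(_ y) /implyP H /H /implyP H' /H'.
by case/orP => /eqP; [left|right].
Qed.
End TauFacts.

Definition tab4 (b0 b1 b2 b3 : bool) (y : 'I_4) : bool :=
  match val y with 0 => b0 | 1 => b1 | 2 => b2 | _ => b3 end%N.
Lemma tab4E (g : 'I_4 -> bool) y : g y = tab4 (g O0) (g O1) (g O2) (g O3) y.
Proof.
case: y => [[|[|[|[|]]]] Hx] //=; by rewrite (bool_irrelevance Hx isT).
Qed.

Definition slice_fin := allb (fun b0 => allb (fun b1 => allb (fun b2 => allb (fun b3 =>
  allb (fun c0 => allb (fun c1 => allb (fun c2 => allb (fun c3 =>
  let g := tab4 b0 b1 b2 b3 in let f := tab4 c0 c1 c2 c3 in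
  all4 (fun z => all4 (fun x => all4 (fun x' => (f x == f x') ==> (g (negsub z x) == g (negsub z x'))))) ==>
  all4 (fun y => g y == g (add4 y O2)))))))))).
Lemma slice_finP : slice_fin. Proof. vm_compute. reflexivity. Qed.

Lemma slice_comb (g f : 'I_4 -> bool) :
  (forall z x x', f x = f x' -> g (negsub z x) = g (negsub z x')) ->
  forall y, g y = g (add4 y O2).
Proof.
move=> H y.
have H' : forall z x x', tab4 (f O0) (f O1) (f O2) (f O3) x = tab4 (f O0) (f O1) (f O2) (f O3) x' ->
   tab4 (g O0) (g O1) (g O2) (g O3) (negsub z x) = tab4 (g O0) (g O1) (g O2) (g O3) (negsub z x').
  by move=> z x x'; rewrite -!tab4E; apply: H.
rewrite (tab4E g y) (tab4E g (add4 y O2)); move: H'.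
move: (g O0) (g O1) (g O2) (g O3) (f O0) (f O1) (f O2) (f O3) => b0 b1 b2 b3 c0 c1 c2 c3 H'.
have /implyP F : all4 (fun z => all4 (fun x => all4 (fun x' => (tab4 c0 c1 c2 c3 x == tab4 c0 c1 c2 c3 x') ==> (tab4 b0 b1 b2 b3 (negsub z x) == tab4 b0 b1 b2 b3 (negsub z x'))))) ==>
  all4 (fun y => tab4 b0 b1 b2 b3 y == tab4 b0 b1 b2 b3 (add4 y O2)).
  exact: (allbP (allbP (allbP (allbP (allbP (allbP (allbP (allbP slice_finP b0) b1) b2) b3) c0) c1) c2) c3).
apply/eqP; apply: (all4P (F _) y).
apply/all4I => z; apply/all4I => x; apply/all4I => x'; apply/implyP => /eqP /(H' z) ->.
exact: eqxx.
Qed.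

Definition adj_fin := all4 (fun x0 => all4 (fun x1 => (x1 != x0) ==> (x1 != add4 x0 O2) ==>
   [&& (x1 == add4 x0 O1) || (add4 x1 O1 == x0),
       all4 (fun x => swp x0 (add4 x x0) == add4 (piI x) x0) &
       all4 (fun x => swp x1 (add4 x x1) == add4 (piI x) x1)])).
Lemma adj_finP : adj_fin. Proof. vm_compute. reflexivity. Qed.

From Stdlib Require Import Relation_Operators.
Import GRing.Theory Num.Theory.

Definition setk d (a : idx d 4) (k : 'I_d) (x : 'I_4) : idx d 4 :=
  [ffun i => if i == k then x else a i].
Definition mono d (t : {perm 'I_d}) (sg : 'I_d -> {perm 'I_4}) (a : idx d 4) : idx d 4 :=
  [ffun i => sg i (a (t i))].

Lemma mono_comp d t1 s1 t2 s2 (a : idx d 4) :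
  mono t1 s1 (mono t2 s2 a) = mono (t1 * t2)%g (fun i => s2 (t1 i) * s1 i)%g a.
Proof. by apply/ffunP => i; rewrite !ffunE !permM. Qed.

Lemma equiv_mono (R : realFieldType) d (X Y : mat R d 4) : mat_equiv X Y ->
  exists t sg, (forall a, Y a = X (mono t sg a)) /\
     (forall Z : mat R d 4, mat_equiv Z (fun a => Z (mono t sg a))).
Proof.
move=> H; induction H as [X Y st| X | X Y Z _ IH1 _ IH2].
- case: st => [A t | A k s].
  + exists t, (fun _ => 1%g); split => [a|Z].
      by congr A; apply/ffunP=> i; rewrite !ffunE perm1.
    have -> : (fun a => Z (mono t (fun _ => 1%g) a)) = (fun a => Z [ffun i => a (t i)]).
      by apply: functional_extensionality => a; congr Z; apply/ffunP => i; rewrite !ffunE perm1.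
    exact: rt_step (step_pos Z t).
  + exists 1%g, (fun i => if i == k then s else 1%g); split => [a|Z].
      by congr A; apply/ffunP=> i; rewrite !ffunE perm1; case: eqP; rewrite ?perm1.
    have -> : (fun a => Z (mono 1%g (fun i => if i == k then s else 1%g) a)) =
              (fun a => Z [ffun i => if i == k then s (a i) else a i]).
      by apply: functional_extensionality => a; congr Z; apply/ffunP => i; rewrite !ffunE perm1; case: eqP; rewrite ?perm1.
    exact: rt_step (step_val Z k s).
- exists 1%g, (fun _ => 1%g); split => [a|Z].
    by rewrite /mono; congr X; apply/ffunP=> i; rewrite !ffunE !perm1.
  have -> : (fun a => Z (mono 1%g (fun _ => 1%g) a)) = Z.
    by apply: functional_extensionality => a; congr Z; apply/ffunP => i; rewrite !ffunE !perm1.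
  exact: rt_refl.
- case: IH1 => t1 [s1 [E1 Z1]]; case: IH2 => t2 [s2 [E2 Z2]].
  exists (t1 * t2)%g, (fun i => s2 (t1 i) * s1 i)%g; split => [a|W].
    by rewrite E2 E1 mono_comp.
  apply: rt_trans (Z1 W) _.
  have -> : (fun a => W (mono (t1 * t2)%g (fun i => s2 (t1 i) * s1 i)%g a)) =
            (fun a => (fun b => W (mono t1 s1 b)) (mono t2 s2 a)).
    by apply: functional_extensionality => a; rewrite mono_comp.
  exact: Z2.
Qed.

Lemma xorsumD1 d (f : 'I_d -> bool) k :
  xorsum f = f k (+) xorsum (fun i => if i == k then false else f i).
Proof.
rewrite /xorsum (bigD1 k) //=; congr addb; rewrite big_mkcond /=.
by apply: eq_bigr => i _; case: eqP.
Qed.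

Lemma xorsum_odd d (y : 'I_d -> bool) : xorsum y = odd #|[set i | y i]|.
Proof.
rewrite -sum1_card (big_morph odd oddD (erefl (odd 0))) /xorsum /=.
rewrite [RHS]big_mkcond /=; apply: eq_bigr => i _; rewrite inE; by case: (y i).
Qed.

Section BP.
Variables (R : realFieldType) (d : nat).
Implicit Types (E : {ffun 'I_d -> 'I_3}) (a : idx d 4) (k : 'I_d).
Local Open Scope ring_scope.

Definition Rk E a k := xorsum (fun i => if i == k then false else pfun (E i) (a i)).
Definition Mk E a k := xorsum (fun i => if i == k then false else mufun (E i) (a i)).
Definition y0 E a k (b : bool) : {ffun 'I_d -> bool} :=
  [ffun i => if i == k then b else pfun (E i) (a i)].

Lemma setk_id a k : setk a k (a k) = a.
Proof. by apply/ffunP => i; rewrite ffunE; case: eqP => [->|]. Qed.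

Lemma xorsum_p_setk E a k x :
  xorsum (fun i => pfun (E i) (setk a k x i)) = Rk E a k (+) pfun (E k) x.
Proof.
rewrite (xorsumD1 _ k) /Rk ffunE eqxx addbC; congr addb.
by apply: eq_bigr => i _; rewrite ffunE; case: eqP.
Qed.

Lemma xorsum_mu_setk E a k x :
  xorsum (fun i => mufun (E i) (setk a k x i)) = Mk E a k (+) mufun (E k) x.
Proof.
rewrite (xorsumD1 _ k) /Mk ffunE eqxx addbC; congr addb.
by apply: eq_bigr => i _; rewrite ffunE; case: eqP.
Qed.

Lemma pvec_setk E a k x : pvec E (setk a k x) = y0 E a k (pfun (E k) x).
Proof. by apply/ffunP => i; rewrite !ffunE; case: eqP => [->|]. Qed.

Lemma bp_setk E lam s a k x :
  blockperm R E lam s (setk a k x) =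
  if (Rk E a k (+) pfun (E k) x == s) &&
     (Mk E a k (+) mufun (E k) x (+) lf (lam (y0 E a k false)) (lam (y0 E a k true)) (pfun (E k) x) == false)
  then (1 : R) else 0.
Proof. by rewrite /blockperm xorsum_p_setk xorsum_mu_setk pvec_setk; case: (pfun _ _). Qed.

Lemma if10 (c : bool) : ((if c then (1:R) else 0) != 0) = c.
Proof. by case: c; rewrite ?eqxx ?oner_eq0. Qed.

Lemma bp_neq0 E lam s a : (blockperm R E lam s a != 0) =
  (xorsum (fun i => pfun (E i) (a i)) == s) &&
  ((xorsum (fun i => mufun (E i) (a i))) (+) lam (pvec E a) == false).
Proof. by rewrite /blockperm if10. Qed.

Lemma filled_pvec E s a : filled s (pvec E a) = (xorsum (fun i => pfun (E i) (a i)) == s).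
Proof.
rewrite /filled /hweight -xorsum_odd; congr (_ == _).
by apply: eq_bigr => i _; rewrite ffunE.
Qed.

Lemma hnew_pt (B B' : mat R d 4) E s :
  (forall y, filled s y -> supp B' :&: subcube E y \subset supp B) ->
  forall a, xorsum (fun i => pfun (E i) (a i)) == s -> B' a != 0 -> B a != 0.
Proof.
move=> H a hf hb'.
have := subsetP (H (pvec E a) _) a; rewrite !inE filled_pvec hf eqxx hb'.
by move=> /(_ isT isT).
Qed.
End BP.

Lemma card_inter d (E E' : {ffun 'I_d -> 'I_3}) (y y' : {ffun 'I_d -> bool}) :
  #|subcube E y :&: subcube E' y'| =
  if [forall i, (E i != E' i) || (y i == y' i)] then (2 ^ #|[set i | E i == E' i]|)%N else 0%N.
Proof.
have -> : #|subcube E y :&: subcube E' y'| =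
   #|family (fun i => [pred x : 'I_4 | (pfun (E i) x == y i) && (pfun (E' i) x == y' i)])|.
  apply: eq_card => a; rewrite !inE; apply/andP/familyP => [[/eqP h1 /eqP h2] i|h].
    by rewrite inE -h1 -h2 !ffunE !eqxx.
  split; apply/eqP/ffunP => i; rewrite ffunE; by have := h i; rewrite inE => /andP [/eqP ? /eqP ?].
rewrite card_family foldrE big_map big_enum /=.
case: (boolP [forall i, _]) => H.
  rewrite (eq_bigr (fun i => if E i == E' i then 2 else 1)%N) => [|i _]; last first.
    rewrite factorE; case: eqP => // heq; move/forallP: H => /(_ i).
    by rewrite heq eqxx /= => ->.
  rewrite -big_mkcond /= (eq_bigl (fun i => i \in [set i | E i == E' i])) ?prod_nat_const // => i.
  by rewrite inE.
move/forallPn: H => [i]; rewrite negb_or negbK => /andP [he hy].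
by rewrite (bigD1 i) //= factorE he (negbTE hy).
Qed.

Lemma tess_k d (E E' : {ffun 'I_d -> 'I_3}) s s' : (0 < d)%N ->
  tess_index E s E' s' = Some d.-1 ->
  exists k, E k != E' k /\ forall i, i != k -> E i = E' i.
Proof.
move=> d0.
set na := #|[set i | E i == E' i]|.
have Hm : max_inter E s E' s' = 0%N \/ max_inter E s E' s' = (2 ^ na)%N.
  rewrite /max_inter; apply: (big_ind (fun x => x = 0%N \/ x = (2 ^ na)%N)).
  - by left.
  - by move=> x1 x2 [->|->] [->|->]; rewrite ?max0n ?maxn0 ?maxnn; auto.
  move=> y _; apply: (big_ind (fun x => x = 0%N \/ x = (2 ^ na)%N)).
  - by left.
  - by move=> x1 x2 [->|->] [->|->]; rewrite ?max0n ?maxn0 ?maxnn; auto.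
  by move=> y' _; rewrite card_inter; case: ifP; auto.
rewrite /tess_index; case: Hm => ->; first by rewrite eqxx.
rewrite expn_eq0 /= trunc_expnK // => -[hna].
have h1 : #|~: [set i | E i == E' i]| = 1%N.
  have := cardsC [set i | E i == E' i]; rewrite card_ord -/na hna; lia.
move/eqP: h1 => /cards1P [k hk]; exists k; split.
  have : k \in ~: [set i | E i == E' i] by rewrite hk set11.
  by rewrite !inE.
move=> i hik; apply/eqP.
have : i \notin ~: [set i | E i == E' i] by rewrite hk inE.
by rewrite !inE negbK.
Qed.

Section F1.
Variables (R : realFieldType) (d : nat).
Local Open Scope ring_scope.

Lemma F1 (E E' : {ffun 'I_d -> 'I_3}) lam lam' s s' k :
  E k != E' k -> (forall i, i != k -> E i = E' i) ->
  (forall a : idx d 4, xorsum (fun i => pfun (E i) (a i)) == s ->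
     blockperm R E' lam' s' a != 0 -> blockperm R E lam s a != 0) ->
  (forall a : idx d 4, xorsum (fun i => pfun (E' i) (a i)) == s' ->
     blockperm R E lam s a != 0 -> blockperm R E' lam' s' a != 0) ->
  forall a : idx d 4, blockperm R E' lam' s' a =
            blockperm R E lam s (setk a k (tau (E k) (E' k) (s (+) s') (a k))).
Proof.
move=> hk hoff hn hn' a.
have hR : Rk E' a k = Rk E a k.
  rewrite /Rk; apply: eq_bigr => i _; case: eqP => [//|/eqP h]; by rewrite (hoff i h).
have hM : Mk E' a k = Mk E a k.
  rewrite /Mk; apply: eq_bigr => i _; case: eqP => [//|/eqP h]; by rewrite (hoff i h).
have bB x : blockperm R E lam s (setk a k x) =
   if Bxf (E k) s (Rk E a k) (Mk E a k) (lam (y0 E a k false)) (lam (y0 E a k true)) x then 1 else 0.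
  exact: bp_setk.
have bB' x : blockperm R E' lam' s' (setk a k x) =
   if Bxf (E' k) s' (Rk E a k) (Mk E a k) (lam' (y0 E' a k false)) (lam' (y0 E' a k true)) x then 1 else 0.
  by rewrite -hR -hM; exact: bp_setk.
have C := core_prop (R := Rk E a k) (Mu := Mk E a k) (L0 := lam (y0 E a k false)) (L1 := lam (y0 E a k true))
   (L0' := lam' (y0 E' a k false)) (L1' := lam' (y0 E' a k true)) (s := s) (s' := s') hk.
rewrite -{1}(setk_id a k) bB' bB C //.
- move=> x hx hb'; move: (hn (setk a k x)); rewrite xorsum_p_setk bB bB' !if10; exact.
- move=> x hx hb; move: (hn' (setk a k x)); rewrite xorsum_p_setk hR bB bB' !if10; exact.
Qed.
End F1.

Lemma sum_setk d (a : idx d 4) j x :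
  (\sum_i (setk a j x i : nat) + a j = \sum_i (a i : nat) + x)%N.
Proof.
rewrite (bigD1 j) //= [in RHS](bigD1 j) //= ffunE eqxx.
rewrite (eq_bigr (fun i => (a i : nat))) => [|i hi]; last by rewrite ffunE (negbTE hi).
by rewrite addnC [x + _]addnC addnA.
Qed.

Lemma xorsumD2 d (f : 'I_d -> bool) k m : k != m ->
  xorsum f = f k (+) f m (+) xorsum (fun i => if (i == k) || (i == m) then false else f i).
Proof.
move=> hkm; rewrite (xorsumD1 f k) -addbA; congr addb.
rewrite (xorsumD1 (fun i => if i == k then false else f i) m) [m == k]eq_sym (negbTE hkm); congr addb.
rewrite /xorsum; apply: eq_bigr => i _; by case: eqP; case: eqP.
Qed.

Section MS.
Variables (R : realFieldType) (d : nat).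
Local Open Scope ring_scope.

Lemma Mmat_perm (p : {perm 'I_d}) (a : idx d 4) : Mmat R d 4 [ffun i => a (p i)] = Mmat R d 4 a.
Proof.
rewrite /Mmat; congr (if _ then _ else _); congr (_ %% _ == _)%N.
rewrite [RHS](reindex_inj (@perm_inj _ p)) /=; apply: eq_bigr => i _; by rewrite ffunE.
Qed.

Lemma bp_slice E lam s (b b' : idx d 4) k m : k != m ->
  (forall i, i != k -> i != m -> b' i = b i) ->
  blockperm R E lam s b != 0 -> blockperm R E lam s b' != 0 ->
  pfun (E m) (b m) = pfun (E m) (b' m) -> pfun (E k) (b k) = pfun (E k) (b' k).
Proof.
move=> hkm hoff; rewrite !bp_neq0 => /andP [/eqP h1 _] /andP [/eqP h2 _] hm.
move: h1 h2; rewrite (xorsumD2 _ hkm) (xorsumD2 (fun i => pfun (E i) (b' i)) hkm) hm.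
set X := xorsum _; set Y := xorsum _.
have -> : X = Y.
  rewrite /X /Y /xorsum; apply: eq_bigr => i _.
  case: (eqVneq i m) => him; case: (eqVneq i k) => hik //=; by rewrite hoff.
move=> <-; by case: (pfun _ _); case: (pfun _ _); case: Y; case: (pfun _ _).
Qed.
End MS.

Section Slice.
Variables (R : realFieldType) (d : nat).
Local Open Scope ring_scope.

Lemma negsubE (z x : 'I_4) : val (negsub z x) = ((8 - z - x) %% 4)%N.
Proof. by rewrite o4K // ltn_pmod. Qed.

Lemma slice_M E lam s (t : {perm 'I_d}) sg k : (3 <= d)%N ->
  (forall a, Mmat R d 4 a = blockperm R E lam s (mono t sg a)) ->
  forall y, pfun (E k) (sg k y) = pfun (E k) (sg k (add4 y O2)).
Proof.
move=> hd hMB.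
have [m hmk] : exists m, m != k.
  have : #|~: [set k]| != 0%N by have := cardsC [set k]; rewrite cards1 card_ord; lia.
  by rewrite cards_eq0 => /set0Pn [m]; rewrite !inE => hm; exists m.
have [r [hrk hrm]] : exists r, r != k /\ r != m.
  have : #|~: [set k; m]| != 0%N.
    by have := cardsC [set k; m]; rewrite cards2 eq_sym hmk card_ord; lia.
  by rewrite cards_eq0 => /set0Pn [r]; rewrite !inE negb_or => /andP [h1 h2]; exists r.
have tinj i j : (t i == t j) = (i == j) by rewrite (inj_eq perm_inj).
apply: (slice_comb (f := fun x => pfun (E m) (sg m x))) => z x x' hf.
pose zero : idx d 4 := [ffun=> O0].
pose P w := setk (setk (setk zero (t r) z) (t m) w) (t k) (negsub z w).
have Pk w : P w (t k) = negsub z w by rewrite ffunE eqxx.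
have Pm w : P w (t m) = w by rewrite !ffunE tinj (negbTE hmk) eqxx.
have Poff w i : i != k -> i != m -> P w (t i) = setk zero (t r) z (t i).
  by move=> h1 h2; rewrite !ffunE !tinj (negbTE h1) (negbTE h2).
have hP w : Mmat R d 4 (P w) = 1.
  rewrite /Mmat.
  have h1 := sum_setk (setk (setk zero (t r) z) (t m) w) (t k) (negsub z w).
  have h2 := sum_setk (setk zero (t r) z) (t m) w.
  have h3 := sum_setk zero (t r) z.
  have h0 : (\sum_i (zero i : nat) = 0)%N by rewrite big1 // => i _; rewrite ffunE.
  move: h1 h2 h3; rewrite !ffunE !tinj [k == m]eq_sym (negbTE hmk) [k == r]eq_sym (negbTE hrk) [m == r]eq_sym (negbTE hrm) h0.
  rewrite negsubE /= => h1 h2 h3.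
  have hz := ltn_ord z; have hw := ltn_ord w.
  suff -> : ((\sum_i (P w i : nat)) %% 4 == 0)%N by [].
  rewrite /P; move: h1; rewrite addn0 => ->; move: h2; rewrite addn0 => ->.
  move: h3; rewrite addn0 add0n => ->.
  apply/eqP; lia.
have hb w : blockperm R E lam s (mono t sg (P w)) != 0 by rewrite -hMB hP oner_neq0.
have hkm : k != m by rewrite eq_sym.
have := bp_slice (b := mono t sg (P x)) (b' := mono t sg (P x')) hkm _ (hb x) (hb x').
have mo w i : mono t sg (P w) i = sg i (P w (t i)) by rewrite ffunE.
rewrite !mo !Pk !Pm; apply => //.
by move=> i h1 h2; rewrite !mo !Poff.
Qed.
End Slice.

Lemma tau_conj (e e' : 'I_3) c (sk : {perm 'I_4}) : e != e' ->
  (forall y, pfun e (sk y) = pfun e (sk (add4 y O2))) ->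
  exists v, (forall x, (sk^-1)%g (tau e e' c (sk x)) = swp v x) /\
            (forall x, swp v (add4 x v) = add4 (piI x) v).
Proof.
move=> hee hC.
have [u hu] := tau_moved c hee.
set x0 := (sk^-1)%g u; set x1 := (sk^-1)%g (tau e e' c u).
have h01 : x1 != x0.
  apply: contra hu => /eqP h; apply/eqP.
  by have := congr1 sk h; rewrite /x0 /x1 !permKV.
have h02 : x1 != add4 x0 O2.
  apply/eqP => h; have := hC x0; rewrite -h /x0 /x1 !permKV => /eqP.
  by rewrite eq_sym; apply/negP; apply: tau_pdiff hee _ hu.
have /implyP/(_ h01)/implyP/(_ h02)/and3P [hA /all4P hS0 /all4P hS1] := all4P (all4P adj_finP x0) x1.
have key x : (sk^-1)%g (tau e e' c (sk x)) = if x == x0 then x1 else if x == x1 then x0 else x.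
  case: (eqVneq x x0) => [->|h0]; first by rewrite /x0 permKV.
  case: (eqVneq x x1) => [->|h1]; first by rewrite /x1 permKV (tauK _ hee).
  case: (eqVneq (tau e e' c (sk x)) (sk x)) => [->|hm]; first by rewrite permK.
  case: (tau_two hee hu hm) => hx.
    by move: h0; rewrite /x0 -hx permK eqxx.
  by move: h1; rewrite /x1 -hx permK eqxx.
case/orP: hA => /eqP hA.
- exists x0; split => [x|x]; last exact/eqP/hS0.
  by rewrite key /swp -hA.
- exists x1; split => [x|x]; last exact/eqP/hS1.
  rewrite key /swp hA.
  case: (eqVneq x x0) => [->|h0]; first by rewrite eq_sym (negbTE h01).
  by case: (eqVneq x x1).
Qed.

Section Final.
Variables (R : realFieldType) (d : nat).
Local Open Scope ring_scope.

Lemma o4E n : (n < 4)%N -> val (o4 n) = n.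
Proof. exact: o4K. Qed.

Lemma Mshift (a : idx d 4) (o dl : 'I_d) (v w : 'I_4) : o != dl ->
  Mmat R d 4 (setk (setk a o (add4 (a o) (o4 ((4 - v) %% 4)%N))) dl (add4 w v)) =
  Mmat R d 4 (setk a dl w).
Proof.
move=> hod; rewrite /Mmat.
have h1 := sum_setk (setk a o (add4 (a o) (o4 ((4 - v) %% 4)%N))) dl (add4 w v).
have h2 := sum_setk a o (add4 (a o) (o4 ((4 - v) %% 4)%N)).
have h3 := sum_setk a dl w.
move: h1 h2 h3; rewrite ffunE eq_sym (negbTE hod) !add4E o4E ?ltn_pmod // => h1 h2 h3.
have := ltn_ord v; have := ltn_ord w; have := ltn_ord (a o); have := ltn_ord (a dl) => *.
set S2 := (\sum_(i < d) (setk (setk a o (add4 (a o) (o4 ((4 - v) %% 4)%N))) dl (add4 w v) i : nat))%N in h1 *.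
set S3 := (\sum_(i < d) (setk a dl w i : nat))%N in h3 *.
set S1 := (\sum_(i < d) (setk a o (add4 (a o) (o4 ((4 - v) %% 4)%N)) i : nat))%N in h1 h2 *.
set S := (\sum_(i < d) (a i : nat))%N in h2 h3 *.
congr (if _ then _ else _).
apply/idP/idP => /eqP h; apply/eqP; lia.
Qed.
End Final.

Definition shift_fin := all4 (fun v => all4 (fun x =>
  (add4 (add4 x v) (o4 ((4 - v) %% 4)%N) == x) && (add4 (add4 x (o4 ((4 - v) %% 4)%N)) v == x))).
Lemma shift_finP : shift_fin. Proof. vm_compute. reflexivity. Qed.
Lemma add4K (v x : 'I_4) : add4 (add4 x v) (o4 ((4 - v) %% 4)%N) = x.
Proof. by have /andP [/eqP -> _] := all4P (all4P shift_finP v) x. Qed.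
Lemma add4Kn (v x : 'I_4) : add4 (add4 x (o4 ((4 - v) %% 4)%N)) v = x.
Proof. by have /andP [_ /eqP ->] := all4P (all4P shift_finP v) x. Qed.
Lemma add4_inj (v : 'I_4) : injective (fun x => add4 x v).
Proof. by move=> x y /(congr1 (fun z => add4 z (o4 ((4 - v) %% 4)%N))); rewrite !add4K. Qed.
Lemma add4n_inj (v : 'I_4) : injective (fun x => add4 x (o4 ((4 - v) %% 4)%N)).
Proof. by move=> x y /(congr1 (fun z => add4 z v)); rewrite !add4Kn. Qed.

Lemma setk_setk d (a : idx d 4) j x y : setk (setk a j x) j y = setk a j y.
Proof. by apply/ffunP => i; rewrite !ffunE; case: eqP. Qed.

Lemma Mpi_setk (R : realFieldType) d (a : idx d 4) (dl : 'I_d) : val dl = d.-1 ->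
  Mpi R d 4 a = Mmat R d 4 (setk a dl (piI (a dl))).
Proof.
move=> hdl; rewrite /Mpi /Mmat; congr (if _ then _ else _); congr (_ %% _ == _)%N.
apply: eq_bigr => i _; rewrite ffunE.
have -> : (i == dl) = ((i : nat) == d.-1) by rewrite -hdl.
case: eqP => [hi|//]; have -> : i = dl by apply: val_inj; rewrite /= hi hdl.
by rewrite piIE.
Qed.

Local Open Scope ring_scope.

Theorem mainTheorem13 (R : realFieldType) (d : nat) (hd : (3 <= d)%N)
    (l : R) (hl : 0 < l < 1) (B B' : mat R d 4)
    (hB : mat_equiv B (Mmat R d 4)) (hB' : mat_equiv B' (Mmat R d 4))
    (E : {ffun 'I_d -> 'I_3}) (lam : {ffun 'I_d -> bool} -> bool) (s : bool)
    (E' : {ffun 'I_d -> 'I_3}) (lam' : {ffun 'I_d -> bool} -> bool) (s' : bool)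
    (hBE : B = blockperm R E lam s) (hBE' : B' = blockperm R E' lam' s')
    (htess : tess_index E s E' s' = Some d.-1)
    (hnew : forall y, filled s y ->
              supp B' :&: subcube E y \subset supp B)
    (hnew' : forall y', filled s' y' ->
              supp B :&: subcube E' y' \subset supp B') :
  exists A' : mat R d 4, in_L A' /\
    mat_equiv (fun a => l * B a + (1 - l) * B' a) A'.
Proof.
have d0 : (0 < d)%N by lia.
have [k [hk hoff]] := tess_k d0 htess.
have hn := hnew_pt hnew.
have hn' := hnew_pt hnew'.
subst B B'.
have hF1 := F1 hk hoff hn hn'.
have [t [sg [hMB hZ]]] := equiv_mono hB.
have hC := @slice_M R d E lam s t sg k hd hMB.
have [v [hv1 hv2]] := @tau_conj (E k) (E' k) (s (+) s') (sg k) hk hC.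
set jk := t k.
set A := fun a => l * blockperm R E lam s a + (1 - l) * blockperm R E' lam' s' a.
have key a : A (mono t sg a) = l * Mmat R d 4 a + (1 - l) * Mmat R d 4 (setk a jk (swp v (a jk))).
  rewrite /A hF1 !hMB; congr (_ + _ * blockperm R E lam s _).
  apply/ffunP => i; rewrite !ffunE.
  case: (eqVneq i k) => [->|hik]; first by rewrite eqxx -hv1 permKV.
  by rewrite (inj_eq perm_inj) (negbTE hik).
have hdl : (d.-1 < d)%N by lia.
pose dl : 'I_d := Ordinal hdl.
pose o : 'I_d := Ordinal d0.
have hod : o != dl by apply/eqP => /(congr1 val) /=; lia.
pose tp := tperm jk dl.
pose nv := o4 ((4 - v) %% 4)%N.
pose shp := perm (@add4_inj v).
pose shm := perm (@add4n_inj v).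
pose A1 := fun a => A (mono t sg a).
pose A2 := fun a => A1 [ffun i => a (tp i)].
pose A3 := fun a => A2 [ffun i => if i == dl then shp (a i) else a i].
pose A4 := fun a => A3 [ffun i => if i == o then shm (a i) else a i].
exists A4; split; last first.
  eapply rt_trans; first exact: (hZ A).
  eapply rt_trans; first exact: (rt_step _ _ _ _ (step_pos A1 tp)).
  eapply rt_trans; first exact: (rt_step _ _ _ _ (step_val A2 dl shp)).
  exact: (rt_step _ _ _ _ (step_val A3 o shm)).
exists l; split => //; apply: functional_extensionality => a.
set W := setk (setk a o (add4 (a o) nv)) dl (add4 (a dl) v).
have hW : [ffun i => if i == dl then shp ([ffun i => if i == o then shm (a i) else a i] i)
           else [ffun i => if i == o then shm (a i) else a i] i] = W.
  apply/ffunP => i; rewrite !ffunE.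
  case: (eqVneq i dl) => [->|hi]; first by rewrite eq_sym (negbTE hod) permE.
  by case: eqP => // ->; rewrite permE.
have hpos (b : idx d 4) y : setk [ffun i => b (tp i)] jk y = [ffun i => setk b dl y (tp i)].
  apply/ffunP => i; rewrite !ffunE.
  have -> : (tp i == dl) = (i == jk) by rewrite -{1}(tpermL jk dl) (inj_eq perm_inj).
  by [].
rewrite /A4 /A3 /A2 /A1 hW key hpos !Mmat_perm ffunE tpermL.
rewrite /Lmat; congr (_ * _ + _ * _).
  by rewrite /W Mshift // setk_id.
rewrite /W !ffunE eqxx setk_setk hv2 Mshift //.
by rewrite (@Mpi_setk R d a dl).
Qed.
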